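(* Let $\mathcal{H}$ be a complex Hilbert space and $A,B\in\mathcal{B}(\mathcal{H})$. Then for all $p\geq 1$, \[ \omega^{p}(A^{*}B) \leq \frac{1}{2} \|A\|^{p}\|B\|^{p} + \frac{1}{2} \omega^{p}(BA^{*}). \]
   Context: $\omega(T)=\sup\{|\langle Tx,x\rangle|:x\in\mathcal{H},\|x\|=1\}$ denotes the numerical radius and $\|\cdot\|$ the operator norm. *)

(* Defs.v *)
From HB Require Import structures.
From mathcomp Require Import all_boot all_order all_algebra.
From mathcomp Require Import boolp classical_sets reals exp.
From mathcomp Require Import complex.
Set Implicit Arguments. Unset Strict Implicit. Unset Printing Implicit Defensive.
Import Order.TTheory GRing.Theory Num.Theory.
Local Open Scope ring_scope.

Record is_inner_product (R : realType) (V : lmodType R[i]) (ip : V -> V -> R[i]) : Prop := {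
  ip_linear : forall (a : R[i]) (x y z : V), ip (a *: x + y) z = a * ip x z + ip y z;
  ip_conj : forall x y : V, ip y x = conjc (ip x y);
  ip_pos : forall x : V, complex.Im (ip x x) = 0 /\ 0 <= complex.Re (ip x x);
  ip_def : forall x : V, ip x x = 0 -> x = 0
}.

Definition ipnorm (R : realType) (V : lmodType R[i]) (ip : V -> V -> R[i]) (x : V) : R :=
  Num.sqrt (complex.Re (ip x x)).

Definition ip_complete (R : realType) (V : lmodType R[i]) (ip : V -> V -> R[i]) : Prop :=
  forall u : nat -> V,
    (forall e : R, 0 < e -> exists N : nat, forall m n : nat, (N <= m)%N -> (N <= n)%N ->
        ipnorm ip (u m - u n) < e) ->
    exists l : V, forall e : R, 0 < e -> exists N : nat, forall n : nat, (N <= n)%N ->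
        ipnorm ip (u n - l) < e.

Definition is_hilbert (R : realType) (V : lmodType R[i]) (ip : V -> V -> R[i]) : Prop :=
  is_inner_product ip /\ ip_complete ip.

Definition is_bounded_op (R : realType) (V : lmodType R[i]) (ip : V -> V -> R[i])
    (T : V -> V) : Prop :=
  (forall (a : R[i]) (x y : V), T (a *: x + y) = a *: T x + T y) /\
  exists M : R, forall x : V, ipnorm ip (T x) <= M * ipnorm ip x.

Definition is_adjoint (R : realType) (V : lmodType R[i]) (ip : V -> V -> R[i])
    (T S : V -> V) : Prop :=
  forall x y : V, ip (T x) y = ip x (S y).

Definition opnorm (R : realType) (V : lmodType R[i]) (ip : V -> V -> R[i]) (T : V -> V) : R :=
  reals.sup [set r : R | exists x : V, ipnorm ip x = 1 /\ r = ipnorm ip (T x)]%classic.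

Definition numrad (R : realType) (V : lmodType R[i]) (ip : V -> V -> R[i]) (T : V -> V) : R :=
  reals.sup [set r : R | exists x : V, ipnorm ip x = 1 /\ r = Normc.normc (ip (T x) x)]%classic.

(* Main.v *)
Require Import Defs.
From HB Require Import structures.
From mathcomp Require Import all_boot all_order all_algebra.
From mathcomp Require Import boolp classical_sets reals exp.
From mathcomp Require Import complex.
From mathcomp Require Import ring lra.
From mathcomp Require Import interval_inference convex hoelder.
Import Order.TTheory GRing.Theory Num.Theory.
Local Open Scope ring_scope.
Local Open Scope complex_scope.

Lemma pow_step (R : realType) (X a b c p : R) : 1 <= p -> 0 <= X -> 0 <= a -> 0 <= b -> 0 <= c ->
  X <= 2^-1 * (a * b) + 2^-1 * c ->
  X `^ p <= 2^-1 * (a `^ p * b `^ p) + 2^-1 * c `^ p.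
Proof.
move=> p1 X0 a0 b0 c0 hX.
have p0 : 0 <= p by rewrite (le_trans _ p1).
rewrite -powRM //.
rewrite (@le_trans _ _ ((2^-1 * (a * b) + 2^-1 * c) `^ p))//.
  by apply: ge0_ler_powR => //; rewrite nnegrE// (le_trans X0 hX).
rewrite {2 4}(_ : 2^-1 = 1 - 2^-1); last by rewrite {2}(splitr 1) div1r addrK.
apply: (convex_powR p1 (Itv01 _ _)) => //=;
  rewrite ?inE/= ?in_itv/= ?mulr_ge0// ?invr_ge0// ?invf_le1 ?ler1n.
all: by rewrite ?c0.
Qed.

Section IP.
Variables (R : realType) (V : lmodType R[i]) (ip : V -> V -> R[i]).
Hypothesis H : is_inner_product ip.

Notation N := (@Normc.normc R).
Definition Q (x : V) : R := complex.Re (ip x x).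

Lemma ip0l z : ip 0 z = 0.
Proof.
have := ip_linear H 1 0 0 z; rewrite scaler0 addr0 mul1r => h.
by apply: (@addrI _ (ip 0 z)); rewrite addr0 -h.
Qed.

Lemma ipDl x y z : ip (x + y) z = ip x z + ip y z.
Proof. by have := ip_linear H 1 x y z; rewrite scale1r mul1r. Qed.

Lemma ipZl a x z : ip (a *: x) z = a * ip x z.
Proof. by have := ip_linear H a x 0 z; rewrite addr0 ip0l addr0. Qed.

Lemma ipNl x z : ip (- x) z = - ip x z.
Proof. by rewrite -scaleN1r ipZl mulN1r. Qed.

Lemma ipBl x y z : ip (x - y) z = ip x z - ip y z.
Proof. by rewrite ipDl ipNl. Qed.

Lemma ipDr x y z : ip z (x + y) = ip z x + ip z y.
Proof. by rewrite (ip_conj H (x+y) z) (ip_conj H x z) (ip_conj H y z) ipDl rmorphD. Qed.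

Lemma ipZr a x z : ip z (a *: x) = conjc a * ip z x.
Proof. by rewrite (ip_conj H (a *: x) z) (ip_conj H x z) ipZl rmorphM. Qed.

Lemma ipNr x z : ip z (- x) = - ip z x.
Proof. by rewrite -scaleN1r ipZr rmorphN rmorph1 mulN1r. Qed.

Lemma ipBr x y z : ip z (x - y) = ip z x - ip z y.
Proof. by rewrite ipDr ipNr. Qed.

Lemma ip0r z : ip z 0 = 0.
Proof. by rewrite -(scale0r 0) ipZr rmorph0 mul0r. Qed.

Lemma ipxx x : ip x x = (Q x)%:C.
Proof.
rewrite /Q; have [hI _] := ip_pos H x.
by case: (ip x x) hI => a b /= ->.
Qed.

Lemma Q_ge0 x : 0 <= Q x.
Proof. by have [_ ] := ip_pos H x. Qed.

Lemma Q0 x : Q x = 0 -> x = 0.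
Proof. by move=> h; apply: (ip_def H); rewrite ipxx h. Qed.

Lemma ipnorm_sq x : ipnorm ip x ^+ 2 = Q x.
Proof. by rewrite /ipnorm sqr_sqrtr // Q_ge0. Qed.

Lemma ipnorm_ge0 x : 0 <= ipnorm ip x.
Proof. exact: sqrtr_ge0. Qed.

Lemma N_ge0 z : 0 <= N z.
Proof. by case: z => a b; rewrite /Normc.normc sqrtr_ge0. Qed.

Lemma N_C r : N r%:C = `|r|.
Proof. by rewrite /Normc.normc /= expr0n /= addr0 sqrtr_sqr. Qed.

Lemma N_conj z : N (conjc z) = N z.
Proof. by case: z => a b; rewrite /Normc.normc /= sqrrN. Qed.

Lemma mul_conj z : z * conjc z = (N z ^+ 2)%:C.
Proof.
case: z => a b; rewrite /Normc.normc sqr_sqrtr ?addr_ge0 ?sqr_ge0 //.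
by simpc; rewrite (mulrC b a) addNr !expr2.
Qed.

Lemma Re_leN z : complex.Re z <= N z.
Proof.
case: z => a b; rewrite /Normc.normc /=.
rewrite (le_trans (ler_norm a)) // -sqrtr_sqr ler_sqrt ?addr_ge0 ?sqr_ge0 //.
by rewrite lerDl sqr_ge0.
Qed.


Lemma CS2 x y : N (ip x y) ^+ 2 <= Q x * Q y.
Proof.
have [hy|hy] := eqVneq (Q y) 0.
  by rewrite hy mulr0 (@Q0 y hy) ip0r Normc.normc0 expr0n.
set t := Q y; set c := ip x y.
set z := t%:C *: x - c *: y.
have E : ip z z = t%:C * (t%:C * (Q x)%:C - (N c ^+ 2)%:C).
  rewrite /z !ipBl !ipZl !ipBr !ipZr !ipxx -/t (ip_conj H x y) -/c !conjc_real.
  rewrite -mul_conj; ring.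
have : 0 <= Q z by exact: Q_ge0.
rewrite /Q E /= !mul0r !subr0 -/(Q x) pmulr_rge0; last by rewrite lt_neqAle eq_sym hy Q_ge0.
by rewrite subr_ge0 mulrC.
Qed.


Lemma CS x y : N (ip x y) <= ipnorm ip x * ipnorm ip y.
Proof.
rewrite /ipnorm -sqrtrM ?Q_ge0 // -(ger0_norm (N_ge0 _)) -sqrtr_sqr.
exact/ler_wsqrtr/CS2.
Qed.

Lemma Q_scale a x : Q (a *: x) = N a ^+ 2 * Q x.
Proof.
rewrite /Q ipZl ipZr mulrA mul_conj ipxx /=.
by rewrite mul0r subr0.
Qed.

Lemma ipnorm_scale a x : ipnorm ip (a *: x) = N a * ipnorm ip x.
Proof.
rewrite /ipnorm -/(Q _) Q_scale sqrtrM ?sqr_ge0 // sqrtr_sqr ger0_norm //.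
exact: N_ge0.
Qed.

Lemma ipnorm_eq0 x : ipnorm ip x = 0 -> x = 0.
Proof.
move=> /eqP; rewrite sqrtr_eq0 => h; apply: Q0.
by apply/eqP; rewrite eq_le h Q_ge0.
Qed.

Lemma ipnorm0 : ipnorm ip 0 = 0.
Proof. by rewrite /ipnorm ip0l /= sqrtr0. Qed.

Lemma ipnorm1_Q x : ipnorm ip x = 1 -> Q x = 1.
Proof. by move=> h; rewrite -ipnorm_sq h expr1n. Qed.

Section Lin.
Variable T : V -> V.
Hypothesis hT : forall (a : R[i]) (x y : V), T (a *: x + y) = a *: T x + T y.

Lemma T0 : T 0 = 0.
Proof.
have := hT 1 0 0; rewrite scaler0 addr0 scale1r => h.
by apply: (@addrI _ (T 0)); rewrite addr0 -h.
Qed.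

Lemma TZ a x : T (a *: x) = a *: T x.
Proof. by have := hT a x 0; rewrite !addr0 T0 addr0. Qed.

Lemma TD x y : T (x + y) = T x + T y.
Proof. by have := hT 1 x y; rewrite !scale1r. Qed.
End Lin.

Lemma sup_ge (S : set R) r M : S r -> (forall s, S s -> s <= M) -> r <= sup S.
Proof.
move=> Sr hM; apply: sup_upper_bound => //; split; first by exists r.
by exists M.
Qed.

Lemma opnorm_ub T : is_bounded_op ip T -> forall z, ipnorm ip (T z) <= opnorm ip T * ipnorm ip z.
Proof.
move=> [hT [M hM]] z.
have [z0|zn] := eqVneq (ipnorm ip z) 0.
  by rewrite (@ipnorm_eq0 z z0) (T0 _ hT) ipnorm0 mulr0.
set s := ipnorm ip z.
have s0 : 0 < s by rewrite lt_neqAle eq_sym zn ipnorm_ge0.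
set zh := (s^-1)%:C *: z.
have hzh : ipnorm ip zh = 1.
  by rewrite ipnorm_scale N_C ger0_norm ?invr_ge0 ?(ltW s0) // mulVf ?gt_eqF.
have h : ipnorm ip (T zh) <= opnorm ip T.
  apply: (@sup_ge _ _ M); first by exists zh.
  move=> r [x [hx ->]]; by rewrite (le_trans (hM x)) // hx mulr1.
move: h; rewrite (TZ _ hT) ipnorm_scale N_C ger0_norm ?invr_ge0 ?(ltW s0) // => h.
have := ler_wpM2l (ltW s0) h.
by rewrite mulrA mulfV ?gt_eqF // mul1r mulrC.
Qed.

Lemma numrad_ub T M : (forall z, ipnorm ip z = 1 -> N (ip (T z) z) <= M) ->
  forall y, ipnorm ip y = 1 -> N (ip (T y) y) <= numrad ip T.
Proof.
move=> hM y hy; apply: (@sup_ge _ _ M); first by exists y.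
by move=> r [x [hx ->]]; exact: hM.
Qed.


Lemma CM (a b : R) : (a * b)%:C = a%:C * b%:C :> R[i].
Proof. by rewrite rmorphM. Qed.
Lemma CD (a b : R) : (a + b)%:C = a%:C + b%:C :> R[i].
Proof. by rewrite rmorphD. Qed.
Lemma CX (a : R) n : (a ^+ n)%:C = a%:C ^+ n :> R[i].
Proof. by rewrite rmorphXn. Qed.
Lemma CV (a : R) : (a^-1)%:C = (a%:C)^-1 :> R[i].
Proof. by rewrite fmorphV. Qed.
Lemma C1 : (1 : R)%:C = 1 :> R[i].
Proof. by []. Qed.
Lemma conjM (a b : R[i]) : conjc (a * b) = conjc a * conjc b.
Proof. by rewrite rmorphM. Qed.
Lemma ReC (a : R) : complex.Re (a%:C) = a.
Proof. by []. Qed.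

Lemma opnorm_ge0 T : is_bounded_op ip T -> forall y, ipnorm ip y = 1 -> 0 <= opnorm ip T.
Proof.
move=> hT y hy; have := @opnorm_ub T hT y; rewrite hy mulr1.
exact: le_trans (ipnorm_ge0 _).
Qed.

Section Main.
Variables A B Astar : V -> V.
Hypothesis hA : is_bounded_op ip A.
Hypothesis hB : is_bounded_op ip B.
Hypothesis hadj : is_adjoint ip A Astar.

Lemma Astar_bound y : ipnorm ip y = 1 -> ipnorm ip (Astar y) <= opnorm ip A.
Proof.
move=> hy; set w := Astar y.
have h1 : ipnorm ip w ^+ 2 <= opnorm ip A * ipnorm ip w.
  rewrite ipnorm_sq /Q -hadj.
  apply: le_trans (Re_leN _) _; apply: le_trans (CS _ _) _.
  by rewrite hy mulr1; exact: opnorm_ub.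
have [w0|wn] := eqVneq (ipnorm ip w) 0.
  by rewrite w0; exact: (@opnorm_ge0 A hA y hy).
have wp : 0 < ipnorm ip w by rewrite lt_neqAle eq_sym wn ipnorm_ge0.
by move: h1; rewrite expr2 ler_pM2r.
Qed.


Lemma numrad_BA y : ipnorm ip y = 1 -> N (ip (B (Astar y)) y) <= numrad ip (B \o Astar).
Proof.
move=> hy.
apply: (@numrad_ub (B \o Astar) (opnorm ip B * opnorm ip A) _ y hy).
move=> z hz /=; apply: le_trans (CS _ _) _; rewrite hz mulr1.
apply: le_trans (opnorm_ub _ hB _) _; apply: ler_wpM2l.
  exact: (@opnorm_ge0 B hB z hz).
exact: Astar_bound.
Qed.

Lemma G x y : ipnorm ip x = 1 -> ipnorm ip y = 1 ->
  N (ip (B x) y * ip y (A x)) <=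
    2^-1 * (opnorm ip A * opnorm ip B) + 2^-1 * numrad ip (B \o Astar).
Proof.
move=> hx hy.
have [hBl _] := hB.
set w := Astar y; set d := ip w x.
have e1 : ip (B x) y * ip y (A x) = ip (B (d *: x)) y.
  rewrite (TZ _ hBl) ipZl mulrC; congr (_ * _).
  by rewrite (ip_conj H (A x) y) hadj /d (ip_conj H x w).
set r := d *: x + d *: x - w.
have e2 : ip (B (d *: x)) y *+ 2 = ip (B w) y + ip (B r) y.
  by rewrite mulr2n -!ipDl -!(TD _ hBl) /r [w + _]addrC subrK.
have hr : ipnorm ip r = ipnorm ip w.
  have E : ip r r = ip w w.
    rewrite /r !ipBl !ipDl !ipZl !ipBr !ipDr !ipZr.
    rewrite (ipxx x) (@ipnorm1_Q x hx) C1 (ip_conj H w x) -/d.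
    ring.
  by rewrite /ipnorm E.
have hBw : N (ip (B w) y) <= numrad ip (B \o Astar) by exact: numrad_BA.
have hBr : N (ip (B r) y) <= opnorm ip B * opnorm ip A.
  apply: le_trans (CS _ _) _; rewrite hy mulr1.
  apply: le_trans (opnorm_ub _ hB _) _; rewrite hr; apply: ler_wpM2l.
    exact: (@opnorm_ge0 B hB y hy).
  exact: Astar_bound.
have h : N (ip (B (d *: x)) y) *+ 2 <= numrad ip (B \o Astar) + opnorm ip B * opnorm ip A.
  by rewrite -normcMn e2 (le_trans (le_normcD _ _)) // lerD.
rewrite e1; move: h; rewrite (mulrC (opnorm ip B)).
move: (N _) (numrad _ _) (opnorm ip A * opnorm ip B) => a b c h.
rewrite mulr2n in h; lra.
Qed.


Lemma Final x : ipnorm ip x = 1 -> N (ip (Astar (B x)) x) <=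
    2^-1 * (opnorm ip A * opnorm ip B) + 2^-1 * numrad ip (B \o Astar).
Proof.
move=> hx.
set K := 2^-1 * _ + _.
have hK : 0 <= K.
  rewrite addr_ge0 // mulr_ge0 ?invr_ge0 //.
    by rewrite mulr_ge0 // ?(@opnorm_ge0 A hA x hx) ?(@opnorm_ge0 B hB x hx).
  exact: le_trans (N_ge0 _) (@numrad_BA x hx).
have ec : ip (Astar (B x)) x = ip (B x) (A x).
  by rewrite (ip_conj H x (Astar (B x))) -hadj (ip_conj H (B x) (A x)) conjcK.
rewrite ec; set u := B x; set v := A x; set c := ip u v.
have [c0|cn] := eqVneq c 0; first by rewrite c0 Normc.normc0.
set mu := ipnorm ip u; set mv := ipnorm ip v; set nc := N c; set m := mu * mv.
have ncp : 0 < nc.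
  rewrite lt_neqAle N_ge0 andbT; apply/eqP => h.
  by move/eqP: cn; apply; apply: Normc.eq0_normc; rewrite -/nc -h.
have ncm : nc <= m := CS u v.
have mp : 0 < m := lt_le_trans ncp ncm.
have hQu : ip u u = mu%:C ^+ 2 by rewrite ipxx -ipnorm_sq CX.
have hQv : ip v v = mv%:C ^+ 2 by rewrite ipxx -ipnorm_sq CX.
have hcc : conjc c = nc%:C ^+ 2 / c.
  by rewrite -CX -(mul_conj c) [c * _]mulrC mulfK.
set y := (nc * mv)%:C *: u + (mu%:C * c) *: v.
have ep : ip u y * ip y v = (m * nc * (m + nc) ^+ 2)%:C * c.
  rewrite /y !ipDr !ipZr !ipDl !ipZl hQu hQv -/c !conjM !conjc_real hcc.
  rewrite /m !(CM, CD).
  by field.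
have eq : ip y y = (nc ^+ 2 * m * (m + nc) + nc ^+ 2 * m * (m + nc))%:C.
  rewrite /y !ipDr !ipZr !ipDl !ipZl hQu hQv (ip_conj H u v) -/c !conjM !conjc_real hcc.
  rewrite /m !(CM, CD).
  by field.
set z := nc ^+ 2 * m * (m + nc).
have zp : 0 < z by rewrite /z; apply: mulr_gt0; [apply: mulr_gt0|]; rewrite ?exprn_gt0 ?addr_gt0.
set s := ipnorm ip y.
have hs : s ^+ 2 = z + z by rewrite /s ipnorm_sq /Q eq ReC.
have sp : 0 < s.
  rewrite lt_neqAle ipnorm_ge0 andbT; apply/eqP => h.
  by move: hs; rewrite -h expr0n /= => /eqP; rewrite eq_sym paddr_eq0 ?ltW // gt_eqF.
set yh := (s^-1)%:C *: y.
have hyh : ipnorm ip yh = 1.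
  by rewrite ipnorm_scale N_C ger0_norm ?invr_ge0 ?(ltW sp) // mulVf ?gt_eqF.
have := @G x yh hx hyh.
have -> : ip (B x) yh * ip yh (A x) = (s^-1 ^+ 2)%:C * (ip u y * ip y v).
  by rewrite /yh ipZr ipZl conjc_real CX -/u -/v; ring.
rewrite ep !Normc.normcM !N_C !ger0_norm ?exprn_ge0 ?invr_ge0 ?(ltW sp) //; last first.
  by apply: mulr_ge0; [apply: mulr_ge0|]; rewrite ?exprn_ge0 ?addr_ge0 ?ltW.
rewrite -/nc -/K exprVn mulrC ler_pdivrMr ?exprn_gt0 // hs.
move=> h.
set P0 := m * nc ^+ 2 * (m + nc).
have P0p : 0 < P0 by rewrite /P0; apply: mulr_gt0; [apply: mulr_gt0|]; rewrite ?exprn_gt0 ?addr_gt0.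
have h2 : P0 * (m + nc) <= P0 * (K + K).
  have -> : P0 * (m + nc) = m * nc * (m + nc) ^+ 2 * nc by rewrite /P0; ring.
  have -> : P0 * (K + K) = K * (z + z) by rewrite /P0 /z; ring.
  exact: h.
rewrite ler_pM2l // in h2.
lra.
Qed.

End Main.

End IP.

Theorem mainTheorem5 (R : realType) (V : lmodType R[i]) (ip : V -> V -> R[i])
  (A B Astar : V -> V) (p : R) :
  is_hilbert ip ->
  is_bounded_op ip A -> is_bounded_op ip B ->
  is_adjoint ip A Astar ->
  1 <= p ->
  numrad ip (Astar \o B) `^ p <=
    2^-1 * (opnorm ip A `^ p * opnorm ip B `^ p) + 2^-1 * numrad ip (B \o Astar) `^ p.
Proof.
move=> [hip _] hA hB hadj p1.
have [[x0 hx0]|none] := pselect (exists x, ipnorm ip x = 1).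
  have F := @Final R V ip hip A B Astar hA hB hadj.
  have hX : Normc.normc (ip (Astar (B x0)) x0) <= numrad ip (Astar \o B).
    by apply: (@numrad_ub R V ip (Astar \o B) _ _ x0 hx0) => z hz /=; exact: F.
  apply: pow_step => //.
  - exact: le_trans (@N_ge0 R _) hX.
  - exact: (@opnorm_ge0 R V ip hip A hA x0 hx0).
  - exact: (@opnorm_ge0 R V ip hip B hB x0 hx0).
  - exact: le_trans (@N_ge0 R _) (@numrad_BA R V ip hip A B Astar hA hB hadj x0 hx0).
  apply: ge_sup; first by exists (Normc.normc (ip (Astar (B x0)) x0)); exists x0.
  by move=> r [x [hx ->]] /=; exact: F.
have Eo T : opnorm ip T = 0.
  rewrite /opnorm (_ : [set r | _]%classic = set0%classic) ?sup0 //.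
  by apply/seteqP; split => r //= [x [hx _]]; exfalso; apply: none; exists x.
have En T : numrad ip T = 0.
  rewrite /numrad (_ : [set r | _]%classic = set0%classic) ?sup0 //.
  by apply/seteqP; split => r //= [x [hx _]]; exfalso; apply: none; exists x.
have p0 : p != 0 by rewrite gt_eqF // (lt_le_trans _ p1).
by rewrite !Eo !En !powR0 // !mulr0 addr0.
Qed.
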